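(* Let $n\ge 3$ be an odd integer. Then for all $m\in\{3,\ldots,n-1\}$ with $\gcd(m,n)=1$ and $m\neq (n+1)/2$, we have $S(2,n)>S(m,n)$.
   Context: For integers $m,n$ with $n\neq 0$ and $\gcd(m,n)=1$, the Dedekind sum is $s(m,n)=\sum_{j=1}^{|n|}((j/n))((mj/n))$, where $((t))=t-\lfloor t\rfloor-1/2$ if $t\in\mathbb{R}\setminus\mathbb{Z}$ and $((t))=0$ if $t\in\mathbb{Z}$. Define $S(m,n)=12\,s(m,n)$. *)

(* Defs.v *)
From mathcomp Require Import all_boot all_order all_algebra.
Set Implicit Arguments. Unset Strict Implicit. Unset Printing Implicit Defensive.
Import Order.TTheory GRing.Theory Num.Theory.
Local Open Scope ring_scope.

Definition sawtooth (t : rat) : rat :=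
  if t \is a Num.int then 0 else t - (Num.floor t)%:~R - 1 / 2%:R.

Definition dedekind_sum (m n : int) : rat :=
  \sum_(1 <= j < `|n|%N.+1)
     sawtooth ((j%:Z)%:~R / n%:~R) * sawtooth ((m * j%:Z)%:~R / n%:~R).

Definition S (m n : int) : rat := 12%:R * dedekind_sum m n.

(* Main.v *)
Require Import Defs.
From mathcomp Require Import all_boot all_order all_algebra.
Import Order.TTheory GRing.Theory Num.Theory.
Local Open Scope ring_scope.
From mathcomp Require Import zify ring lra.

Section NatPart.
Local Open Scope nat_scope.
Definition absd (x y : nat) : nat := (x - y) + (y - x).
Definition nrm (n x : nat) : nat := minn x (n - x).

Lemma sum_sq_closed (H : nat) : 6 * \sum_(j < H.+1) j ^ 2 = H * H.+1 * (2 * H + 1).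
Proof.
elim: H => [|H IH]; first by rewrite big_ord_recr big_ord0.
rewrite big_ord_recr /= mulnDr IH; lia.
Qed.

Lemma nrm_closed (H : nat) : 12 * \sum_(j < (2 * H).+1) nrm (2 * H).+1 j ^ 2
   = (2 * H).+1 * ((2 * H).+1 ^ 2 - 1).
Proof.
rewrite -(big_mkord xpredT (fun j => nrm (2*H).+1 j ^ 2)) (big_cat_nat _ (n := H.+1)) //=; last lia.
have e1 : \sum_(0 <= i < H.+1) nrm (2 * H).+1 i ^ 2 = \sum_(i < H.+1) i ^ 2.
  rewrite big_mkord; apply: eq_bigr => i _; rewrite /nrm.
  have := ltn_ord i; move=> h; congr (_ ^ 2); lia.
have e2 : \sum_(H.+1 <= i < (2 * H).+1) nrm (2 * H).+1 i ^ 2 = \sum_(i < H.+1) i ^ 2.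
  rewrite -{1}(add0n H.+1) big_addn.
  have -> : (2 * H).+1 - H.+1 = H by lia.
  rewrite big_nat_rev big_mkord big_ord_recl /= add0n.
  apply: eq_bigr => i _; rewrite /nrm /bump /=.
  have := ltn_ord i; move=> h; congr (_ ^ 2); lia.
rewrite e1 e2.
have := sum_sq_closed H; set X := \sum_(i < H.+1) i ^ 2; nia.
Qed.

Lemma sig_split (m n j : nat) : 0 < m -> j < n ->
  (m * j) %% n = (if j + ((m.-1 * j) %% n) < n then j + ((m.-1 * j) %% n)
                   else j + ((m.-1 * j) %% n) - n).
Proof.
move=> m0 jn.
have n0 : 0 < n by lia.
have -> : m * j = j + m.-1 * j by case: m m0 => // m' _; rewrite mulSn.
rewrite -modnDmr.
have := ltn_pmod (m.-1 * j) n0.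
set u := (m.-1 * j) %% n => un.
case: ifP => h; first by rewrite modn_small.
have -> : j + u = (j + u - n) + n by lia.
rewrite modnDr modn_small; lia.
Qed.

Lemma absd_sig (m n j : nat) : 0 < m -> j < n ->
  absd j ((m * j) %% n) = (if j + ((m.-1 * j) %% n) < n then (m.-1 * j) %% n
                   else n - (m.-1 * j) %% n).
Proof.
move=> m0 jn; rewrite sig_split //.
have n0 : 0 < n by lia.
have := ltn_pmod (m.-1 * j) n0.
set u := (m.-1 * j) %% n => un.
rewrite /absd; case: ifP => h; lia.
Qed.

Lemma nrm_le (m n j : nat) : 0 < m -> j < n ->
  nrm n ((m.-1 * j) %% n) <= absd j ((m * j) %% n).
Proof.
move=> m0 jn; rewrite absd_sig // /nrm.
case: ifP => _; lia.
Qed.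

Lemma sum_split (d N : nat) (f : nat -> nat) :
  \sum_(j < d * N) f j = \sum_(t < d) \sum_(r < N) f (t * N + r).
Proof.
elim: d => [|d IH]; first by rewrite mul0n !big_ord0.
rewrite big_ord_recr /= -IH -!(big_mkord xpredT f) -(big_mkord xpredT (fun r => f (d * N + r))) mulSn addnC.
rewrite (big_cat_nat _ (n := d * N)) //=; last lia.
congr (_ + _).
rewrite -{1}(add0n (d * N)) big_addn.
have -> : d * N + N - d * N = N by lia.
by apply: eq_bigr => i _; rewrite addnC.
Qed.

Lemma mul_mod_inj (b n i j : nat) : coprime b n -> (i < n)%N -> (j < n)%N ->
  ((b * i) %% n = (b * j) %% n)%N -> i = j.
Proof.
move=> cop.
wlog ij : i j / (i <= j)%N.
  move=> W hi hj e; case: (leqP i j) => h; first exact: W.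
  by apply/esym/W => //; apply: ltnW.
move=> hi hj /eqP e.
have : (n %| b * (j - i))%N.
  by rewrite mulnBr -eqn_mod_dvd ?leq_mul2l ?ij ?orbT // eq_sym.
rewrite Gauss_dvdr; last by rewrite coprime_sym.
rewrite /dvdn modn_small; last lia.
move/eqP; lia.
Qed.

Lemma sum_perm (R : nmodType) (b n : nat) (F : nat -> R) : (0 < n)%N -> coprime b n ->
  (\sum_(j < n) F ((b * j) %% n)%N = \sum_(j < n) F j)%R.
Proof.
move=> n0 cop.
pose h (j : 'I_n) : 'I_n := Ordinal (ltn_pmod (b * j) n0).
have hinj : injective h.
  move=> i j /(congr1 val) /= e; apply: val_inj => /=.
  exact: (mul_mod_inj _ _ _ _ cop (ltn_ord i) (ltn_ord j) e).
by rewrite [RHS](reindex_inj hinj).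
Qed.

Lemma nrm_mul (d N x : nat) : x < N -> nrm (d * N) (d * x) = d * nrm N x.
Proof. move=> xN; rewrite /nrm minnMr mulnBr //. Qed.

Lemma sum_nrm_class (d N b : nat) : 0 < N -> coprime b N ->
  \sum_(j < d * N) nrm (d * N) ((d * b * j) %% (d * N)) ^ 2
    = d ^ 3 * \sum_(r < N) nrm N r ^ 2.
Proof.
move=> N0 cop.
rewrite (sum_split d N (fun j => nrm (d * N) ((d * b * j) %% (d * N)) ^ 2)).
have inner : forall t, \sum_(r < N) nrm (d * N) ((d * b * (t * N + r)) %% (d * N)) ^ 2
    = d ^ 2 * \sum_(r < N) nrm N r ^ 2.
  move=> t.
  rewrite -(@sum_perm _ b N (fun r => nrm N r ^ 2) N0 cop) big_distrr /=.
  apply: eq_bigr => r _.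
  rewrite -mulnA -muln_modr mulnDr mulnA modnMDl nrm_mul ?ltn_pmod //.
  by rewrite expnMn.
rewrite (eq_bigr (fun _ => d ^ 2 * \sum_(r < N) nrm N r ^ 2)); last by move=> t _; apply: inner.
by rewrite sum_nat_const card_ord mulnA -expnS.
Qed.

Lemma class_u (d N b t r : nat) : (d * b * (t * N + r)) %% (d * N) = d * ((b * r) %% N).
Proof. by rewrite -mulnA -muln_modr mulnDr mulnA modnMDl. Qed.

Definition Dn (m n : nat) := \sum_(j < n) absd j ((m * j) %% n) ^ 2.

Lemma D2_closed (H : nat) : 12 * Dn 2 (2 * H).+1 = (2 * H).+1 * ((2 * H).+1 ^ 2 - 1).
Proof.
rewrite -nrm_closed /Dn; congr (_ * _); apply: eq_bigr => j _.
rewrite absd_sig // ?mul1n ?modn_small //= /nrm.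
have := ltn_ord j; case: ifP => h1 h2; congr (_ ^ 2); lia.
Qed.

Lemma sum_ge1 (n : nat) (f : nat -> nat) (j : nat) : j < n ->
  f j <= \sum_(i < n) f i.
Proof.
move=> jn; rewrite (bigD1 (Ordinal jn)) //=; exact: leq_addr.
Qed.

Lemma sum_prefix (k d : nat) (g : nat -> nat) : k <= d ->
  \sum_(t < k) g t <= \sum_(t < d) g t.
Proof.
move=> kd; rewrite -!(big_mkord xpredT g) [X in _ <= X](big_cat_nat _ (n := k)) //=.
exact: leq_addr.
Qed.

Lemma bad_j (n m H : nat) : n = (2 * H).+1 -> 3 <= m -> m <= n - 1 -> coprime m n ->
  m <> H.+1 -> exists2 j, j < n & n < 2 * absd j ((m * j) %% n).
Proof.
move=> eH m3 mn cop mH.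
case: (leqP (H.+2) m) => hm.
  exists 1; first lia.
  rewrite muln1 modn_small; last lia.
  rewrite /absd; lia.
have m0 : 0 < m by lia.
have ediv := divn_eq n m.
have rm := ltn_pmod n m0.
set q := n %/ m in ediv *; set r := n %% m in ediv rm *.
have r0 : 0 < r.
  rewrite lt0n; apply/negP => /eqP r0.
  have dv : m %| n by rewrite /dvdn -/r r0.
  move: cop; rewrite /coprime (gcdn_idPl dv) => /eqP; lia.
have q2 : 2 <= q by nia.
exists q; first nia.
rewrite (modn_small (m := m * q)); last nia.
rewrite /absd.
have -> : q - m * q = 0 by nia.
case: (leqP 4 m) => m4; nia.
Qed.

Lemma mod_onto (b N y : nat) : coprime b N -> y < N -> exists2 x, x < N & (b * x) %% N = y.
Proof.
move=> cop yN.
have N0 : 0 < N by lia.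
pose h (j : 'I_N) : 'I_N := Ordinal (ltn_pmod (b * j) N0).
have hinj : injective h.
  move=> i j /(congr1 val) /= e; apply: val_inj => /=.
  exact: (mul_mod_inj _ _ _ _ cop (ltn_ord i) (ltn_ord j) e).
have := injF_onto hinj (Ordinal yN); case/codomP => x /(congr1 val) /= ->.
by exists x.
Qed.

Definition delta (m n j : nat) := absd j ((m * j) %% n) ^ 2 - nrm n ((m.-1 * j) %% n) ^ 2.

Lemma class_extra (m d N b H : nat) : N = (2 * H).+1 -> 1 <= H -> coprime b N -> 0 < d ->
  m.-1 = d * b -> 0 < m ->
  (d %/ 3) * (d * (d * N)) <= \sum_(j < d * N) delta m (d * N) j.
Proof.
move=> eN H1 cop d0 ea m0.
have hN : H.+1 < N by lia.
have [j0 j0N hj0] := mod_onto b N H.+1 cop hN.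
rewrite (sum_split d N (delta m (d * N))).
apply: leq_trans (_ : \sum_(t < d) delta m (d * N) (t * N + j0) <= _); last first.
  by apply: leq_sum => t _; exact: (sum_ge1 N (fun r => delta m (d * N) (t * N + r)) j0 j0N).
apply: leq_trans (sum_prefix (d %/ 3) d (fun t => delta m (d * N) (t * N + j0)) (leq_div d 3)).
rewrite -{1}(card_ord (d %/ 3)) -sum_nat_const; apply: leq_sum => t _.
have tk := ltn_ord t.
have k3 : d %/ 3 * 3 <= d by apply: leq_divM.
set k := d %/ 3 in tk k3 *.
have P1 : t.+1 * N <= k * N by rewrite leq_mul2r tk orbT.
rewrite mulSn in P1.
have P2 : 3 * (k * N) <= d * N by rewrite mulnA leq_mul2r; apply/orP; right; lia.
have eN2 : d * N = 2 * (d * H) + d by rewrite eN; ring.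
have P3 : d <= d * H by rewrite -{1}(muln1 d) leq_mul2l H1 orbT.
have jn : t * N + j0 < d * N by lia.
rewrite /delta absd_sig // ea class_u hj0.
have eS : d * H.+1 = d * H + d by rewrite mulnS addnC.
have hlt : t * N + j0 + d * H.+1 < d * N by lia.
rewrite hlt /nrm.
have -> : minn (d * H.+1) (d * N - d * H.+1) = d * H by lia.
have -> : (d * H.+1) ^ 2 = (d * H) ^ 2 + d * (d * N) by rewrite eN; ring.
by rewrite addKn.
Qed.

Lemma closed3 (N : nat) : odd N -> 12 * \sum_(j < N) nrm N j ^ 2 + N = N ^ 3.
Proof.
move=> oN.
have eN : N = (2 * N./2).+1 by rewrite -{1}(odd_double_half N) oN add1n -muln2 mulnC.
rewrite [in X in X + _ = _]eN nrm_closed -eN.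
have N1 : 1 <= N ^ 2 by rewrite expn_gt0; lia.
by rewrite -{3}(muln1 N) -mulnDr subnK // -expnSr.
Qed.

Lemma split_delta (m n : nat) : 0 < m ->
  Dn m n = \sum_(j < n) nrm n ((m.-1 * j) %% n) ^ 2 + \sum_(j < n) delta m n j.
Proof.
move=> m0; rewrite /Dn -big_split /=; apply: eq_bigr => j _.
rewrite /delta subnKC //.
have := nrm_le m n j m0 (ltn_ord j); set x := nrm _ _; set y := absd _ _ => h.
by rewrite leq_exp2r.
Qed.

Lemma D2_nrm (n : nat) : Dn 2 n = \sum_(j < n) nrm n j ^ 2.
Proof.
rewrite /Dn; apply: eq_bigr => j _.
rewrite absd_sig // ?mul1n ?modn_small //= /nrm.
have := ltn_ord j; case: ifP => h1 h2; congr (_ ^ 2); lia.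
Qed.

Lemma comb (n m : nat) : 3 <= n -> odd n -> 3 <= m -> m <= n - 1 -> coprime m n ->
  m <> (n + 1)./2 -> Dn 2 n < Dn m n.
Proof.
move=> n3 on m3 mn cop mh.
have eH : n = (2 * n./2).+1.
 by rewrite -{1}(odd_double_half n) on add1n -muln2 mulnC.
set H := n./2 in eH *.
have mH : m <> H.+1.
  move=> e; apply: mh; rewrite e eH addn1.
  have -> : (2 * H).+2 = (H.+1).*2 by rewrite -muln2; lia.
  by rewrite doubleK.
have m0 : 0 < m by lia.
set a := m.-1.
set d := gcdn a n.
have d0 : 0 < d by rewrite gcdn_gt0; lia.
set N := n %/ d.
have eNd : n = d * N by rewrite mulnC divnK // dvdn_gcdr.
set b := a %/ d.
have ea : a = d * b by rewrite mulnC divnK // dvdn_gcdl.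
have copb : coprime b N.
  have : d * gcdn b N = d by rewrite muln_gcdr -ea -eNd.
  rewrite /coprime => e; apply/eqP; nia.
have oN : odd N by move: on; rewrite eNd oddM => /andP[].
have od : odd d by move: on; rewrite eNd oddM => /andP[].
have da : d <= a by apply: dvdn_leq; [lia | exact: dvdn_gcdl].
have eH' : N = (2 * N./2).+1 by rewrite -{1}(odd_double_half N) oN add1n -muln2 mulnC.
set H' := N./2 in eH' *.
have H'1 : 1 <= H'.
  case: (posnP H') => h; last lia.
  rewrite h /= in eH'; rewrite eH' muln1 in eNd; lia.
have c2 : 12 * Dn 2 n + n = n ^ 3 by rewrite D2_nrm; exact: closed3.
have cw : 12 * \sum_(j < n) nrm n ((m.-1 * j) %% n) ^ 2 + d ^ 2 * n = n ^ 3.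
  have := closed3 N oN.
  rewrite -/a ea eNd sum_nrm_class //; last lia.
  move=> h; rewrite expnMn -h; ring.
have e1 : exists2 j, j < n & 0 < delta m n j.
  have [j jn hj] := bad_j n m H eH m3 mn cop mH.
  exists j => //; rewrite /delta subn_gt0 ltn_exp2r // /nrm.
  have := ltn_pmod (m.-1 * j) (_ : 0 < n); lia.
have s1 : 1 <= \sum_(j < n) delta m n j.
  case: e1 => j jn hj; apply: leq_trans hj _; exact: (sum_ge1 n (delta m n) j jn).
rewrite (split_delta m n m0).
set W := \sum_(j < n) nrm n ((m.-1 * j) %% n) ^ 2 in cw *.
set E := \sum_(j < n) delta m n j in s1 *.
have d2 : d != 2 by apply/eqP => e; rewrite e in od.
case: (leqP d 1) => dd.
  have d1 : d = 1 by lia.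
  rewrite d1 mul1n in cw; lia.
have ce := class_extra m d N b H' eH' H'1 copb d0 ea m0.
rewrite -eNd -/E in ce.
have dk : d <= 3 * (d %/ 3) + 2.
  have := divn_eq d 3; have := ltn_pmod d (_ : 0 < 3); lia.
set k := d %/ 3 in ce dk.
have k1 : 1 <= k by lia.
have A1 : d ^ 2 * n <= 3 * (k * (d * n)) + 2 * (d * n).
  have -> : d ^ 2 * n = d * (d * n) by rewrite mulnA.
  have : d * (d * n) <= (3 * k + 2) * (d * n) by rewrite leq_mul2r dk orbT.
  lia.
have A2 : d * n <= k * (d * n) by rewrite -{1}(mul1n (d * n)) leq_mul2r k1 orbT.
lia.
Qed.

End NatPart.

Lemma saw_frac (p n : nat) : (0 < n)%N -> (p %% n != 0)%N ->
  sawtooth ((p%:Z)%:~R / (n%:Z)%:~R) = ((2 * (p %% n))%:R - n%:R) / (2 * n)%:R.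
Proof.
move=> n0 pn.
have nR : (n%:R : rat) != 0 by rewrite pnatr_eq0 -lt0n.
have -> : ((p%:Z)%:~R / (n%:Z)%:~R : rat) = (p %% n)%:R / n%:R + ((p %/ n)%:Z)%:~R.
  rewrite {1}(divn_eq p n) -!pmulrn natrD natrM; field; exact: nR.
have fl0 : Num.floor ((p %% n)%:R / n%:R : rat) = 0.
  apply: floor_def; rewrite /= add0r mulr1z ler_pdivlMr ?ltr0n // mul0r ler0n /=.
  by rewrite ltr_pdivrMr ?ltr0n // mul1r ltr_nat ltn_pmod.
rewrite /sawtooth.
have nint : ((p %% n)%:R / n%:R + ((p %/ n)%:Z)%:~R : rat) \isn't a Num.int.
  apply/negP => H.
  have : ((p %% n)%:R / n%:R : rat) \is a Num.int.
    have -> : ((p %% n)%:R / n%:R : rat) = ((p %% n)%:R / n%:R + ((p %/ n)%:Z)%:~R) - ((p %/ n)%:Z)%:~R by rewrite addrK.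
    by rewrite rpredB // intr_int.
  rewrite intrEfloor fl0 eq_sym mulf_eq0 invr_eq0 (negPf nR) orbF pnatr_eq0.
  by rewrite (negPf pn).
case: ifP => [H|_]; first by case/negP: nint.
rewrite floorDrz ?intr_int // fl0 add0r intrKfloor.
rewrite natrM; field; by rewrite nR.
Qed.

Lemma mod_nz (m n j : nat) : (0 < j < n)%N -> coprime m n -> ((m * j) %% n != 0)%N.
Proof.
move=> /andP[j0 jn] cop; apply/negP => /eqP H.
have : (n %| m * j)%N by rewrite /dvdn H.
rewrite Gauss_dvdr; last by rewrite coprime_sym.
move/(dvdn_leq j0); rewrite leqNgt jn //.
Qed.

Lemma S_formula (m n : nat) : (0 < n)%N -> coprime m n ->
  S m%:Z n%:Z = 3%:R / (n%:R)^+2 *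
   \sum_(1 <= j < n) ((2*j)%:R - n%:R) * ((2 * ((m*j) %% n))%:R - n%:R).
Proof.
move=> n0 cop.
rewrite /S /dedekind_sum absz_nat big_nat_recr //=.
have -> : sawtooth ((n%:Z)%:~R / (n%:Z)%:~R) = 0.
  rewrite /sawtooth divff ?intr_eq0 // ?lt0n_neq0 //.
rewrite mul0r addr0 !big_distrr /=.
apply: eq_big_nat => j /andP[j1 jn].
rewrite -PoszM (saw_frac _ _ n0) ?(saw_frac _ _ n0) ?mod_nz ?j1 //; last first.
  by rewrite modn_small // -lt0n.
rewrite modn_small // !natrM.
have nR : (n%:R : rat) != 0 by rewrite pnatr_eq0 -lt0n.
field; exact: nR.
Qed.


Definition Aterm (n : nat) : rat := \sum_(1 <= j < n) ((2 * j)%:R - n%:R) ^+ 2.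

Lemma Dn_rat (m n : nat) : (Dn m n)%:R =
  \sum_(1 <= j < n) ((j%:R : rat) - ((m * j) %% n)%:R) ^+ 2.
Proof.
rewrite /Dn natr_sum -(big_mkord xpredT (fun j => (absd j ((m * j) %% n) ^ 2)%:R)).
case: n => [|n]; first by rewrite !big_geq.
rewrite big_ltn // /= muln0 mod0n /absd /= add0r.
apply: eq_big_nat => j _.
rewrite natrX.
case: (leqP ((m * j) %% n.+1) j) => h.
  rewrite (_ : (m * j %% n.+1 - j)%N = 0%N) ?addn0; last lia.
  by rewrite natrB.
rewrite (_ : (j - m * j %% n.+1)%N = 0%N) ?add0n; last lia.
rewrite natrB; last exact: ltnW.
by rewrite -sqrrN opprB.
Qed.

Lemma S_D (m n : nat) : (0 < n)%N -> coprime m n ->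
  S m%:Z n%:Z = 3%:R / (n%:R)^+2 * (Aterm n - 2%:R * (Dn m n)%:R).
Proof.
move=> n0 cop; rewrite S_formula //; congr (_ * _).
rewrite Dn_rat /Aterm.
have perm : \sum_(1 <= j < n) ((2 * ((m * j) %% n))%:R - n%:R) ^+ 2
          = \sum_(1 <= j < n) ((2 * j)%:R - n%:R : rat) ^+ 2.
  have := @sum_perm _ m n (fun k => ((2 * k)%:R - n%:R : rat) ^+ 2) n0 cop.
  have e : forall F : nat -> rat, \sum_(j < n) F j = F 0%N + \sum_(1 <= j < n) F j.
    by move=> F; rewrite -(big_mkord xpredT F) big_ltn.
  rewrite (e (fun j => ((2 * ((m * j) %% n))%:R - n%:R : rat) ^+ 2)).
  rewrite (e (fun j => ((2 * j)%:R - n%:R : rat) ^+ 2)) /= muln0 mod0n.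
  by move/addrI.
have pt : forall j, (1 <= j < n)%N ->
    ((2 * j)%:R - n%:R) * ((2 * ((m * j) %% n))%:R - n%:R)
    = (((2 * j)%:R - n%:R) ^+ 2 + ((2 * ((m * j) %% n))%:R - n%:R : rat) ^+ 2) / 2%:R
      - 2%:R * ((j%:R : rat) - ((m * j) %% n)%:R) ^+ 2.
  by move=> j _; rewrite !natrM; field.
rewrite (eq_big_nat _ _ pt) sumrB -big_distrl /= big_split /= perm -big_distrr /=.
by field.
Qed.

Theorem theorem2 (n : nat) :
  (3 <= n)%N -> odd n ->
  forall m : nat, (3 <= m)%N -> (m <= n - 1)%N -> coprime m n ->
  m <> (n + 1)./2 ->
  S (m%:Z) (n%:Z) < S 2%:Z (n%:Z).
Proof.
move=> n3 on m m3 mn cop mh.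
have n0 : (0 < n)%N by lia.
rewrite !S_D // ?coprime2n //.
have h : ((Dn 2 n)%:R : rat) < (Dn m n)%:R by rewrite ltr_nat; apply: comb.
rewrite ltr_pM2l; first lra.
by rewrite divr_gt0 // exprn_gt0 // ltr0n.
Qed.
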